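(* Let $n>3$ be an integer and let $L(n)$ be the graph defined in the context below. Then $L(n)$ is a vertex-transitive integral graph, and the set of distinct eigenvalues of $L(n)$ is exactly $\{-2,-1,0,n-2,n-1\}$.
   Context: Let $[n]=\{1,2,\dots,n\}$. Let $H(n)$ be the graph whose vertex set is $\{v : v\subseteq [n],\ |v|\in\{1,2\}\}$, where two vertices $v,w$ are adjacent if and only if $v\subset w$ or $w\subset v$ (equivalently, $H(n)$ is the subgraph of the hypercube $Q_n$ induced by the vertices of weight $1$ and $2$). Let $L(n)$ be the line graph of $H(n)$: its vertices are the edges $\{\{i\},\{i,j\}\}$ of $H(n)$ (with $i\neq j$ in $[n]$), denoted $[i,ij]$, and two such vertices are adjacent iff, as edges of $H(n)$, they share exactly one endpoint. The eigenvalues of a graph are the eigenvalues of its adjacency matrix; a graph is integral if all its eigenvalues are integers; a graph is vertex-transitive if its automorphism group acts transitively on its vertex set. *)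

(* Defs.v *)
From HB Require Import structures.
From mathcomp Require Import all_boot all_order all_fingroup all_algebra all_field.
Set Implicit Arguments. Unset Strict Implicit. Unset Printing Implicit Defensive.
Import Order.TTheory GRing.Theory Num.Theory.

(* Vertices of H(n): subsets of [n] (here 'I_n) of size 1 or 2.
   Edges of H(n) are pairs {{i},{i,j}} with i <> j.  A vertex [i,ij] of L(n)
   is encoded by the ordered pair (i,j) with i != j. *)
Definition Lvert (n : nat) := {p : 'I_n * 'I_n | p.1 != p.2}.

Definition Hedge (n : nat) (v : Lvert n) : {set {set 'I_n}} :=
  [set [set (val v).1]; [set (val v).1; (val v).2]].

Definition Ladj (n : nat) : rel (Lvert n) :=
  fun v w => #|Hedge v :&: Hedge w| == 1%N.

Definition adjmx (T : finType) (e : rel T) : 'M[algC]_#|T| :=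
  \matrix_(i, j) ((e (enum_val i) (enum_val j))%:R)%R.

Definition graph_eigenvalue (T : finType) (e : rel T) (a : algC) : Prop :=
  eigenvalue (adjmx e) a.

Definition integral_graph (T : finType) (e : rel T) : Prop :=
  forall a, graph_eigenvalue e a -> a \is a Num.int.

Definition graph_aut (T : finType) (e : rel T) (f : {perm T}) : Prop :=
  forall x y, e (f x) (f y) = e x y.

Definition vertex_transitive (T : finType) (e : rel T) : Prop :=
  forall u v : T, exists f : {perm T}, graph_aut e f /\ f u = v.

(* Main.v *)
Require Import Defs.
From HB Require Import structures.
From mathcomp Require Import all_boot all_order all_fingroup all_algebra all_field.
From mathcomp Require Import ring.
Import Order.TTheory GRing.Theory Num.Theory.
Local Open Scope ring_scope.


Lemma set1_eq2 (T : finType) (i k l : T) : k != l -> ([set i] == [set k; l]) = false.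
Proof.
move=> kl; apply/negbTE/negP => /eqP/setP H.
have := H k; have := H l; rewrite !inE !eqxx orbT /= => /eqP <- /eqP ek.
by rewrite ek eqxx in kl.
Qed.

Lemma set2_eq2 (T : finType) (i j k l : T) : i != j -> k != l ->
  ([set i; j] == [set k; l]) = ((i == k) && (j == l)) || ((i == l) && (j == k)).
Proof.
move=> ij kl; apply/idP/idP.
- move/eqP/setP => H.
  move: (H i) (H j) (H k); rewrite !inE !eqxx ?orbT /= => Hi Hj Hk.
  move: (esym Hi) (esym Hj) Hk => {H Hi}.
  case/orP=> /eqP ki; case/orP=> /eqP jk; case/orP => /eqP ik; subst;
   rewrite ?eqxx ?orbT //; by rewrite eqxx in ij kl.
- by case/orP=> /andP[/eqP-> /eqP->]; rewrite // setUC.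
Qed.

Lemma card_I2 (T : finType) (a1 a2 : T) (B : {set T}) : a1 != a2 ->
  #|[set a1; a2] :&: B| = ((a1 \in B) + (a2 \in B))%N.
Proof.
move=> a12.
have E : [set a1; a2] :&: B = [set x | ((x == a1) && (a1 \in B)) || ((x == a2) && (a2 \in B))].
  apply/setP=> x; rewrite !inE.
  case: (x =P a1) => [e1|n1]; case: (x =P a2)=> [e2|n2]; subst; rewrite ?eqxx ?andbT ?andbF ?orbF //; by rewrite eqxx in a12.
rewrite E; case h1: (a1 \in B); case h2: (a2 \in B).
- transitivity #|[set a1; a2]|; last by rewrite cards2 a12.
  by apply: eq_card => x; rewrite !inE ?andbT ?andbF ?orbF.
- transitivity #|[set a1]|; last by rewrite cards1.
  by apply: eq_card => x; rewrite !inE ?andbT ?andbF ?orbF.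
- transitivity #|[set a2]|; last by rewrite cards1.
  by apply: eq_card => x; rewrite !inE ?andbT ?andbF ?orbF.
- transitivity #|(@set0 T)|; last by rewrite cards0.
  by apply: eq_card => x; rewrite !inE ?andbT ?andbF ?orbF.
Qed.

Lemma LadjE n (v w : Lvert n) : Ladj v w =
  (((val v).1 == (val w).1) && ((val v).2 != (val w).2)) ||
  (((val v).1 == (val w).2) && ((val v).2 == (val w).1)).
Proof.
case: v w => [[i j] /= ij] [[k l] /= kl].
rewrite /Ladj /Hedge /= card_I2; last by rewrite set1_eq2.
rewrite !inE set1_eq2 // set2_eq2 //.
have s11 : ([set i] == [set k]) = (i == k).
  by apply/eqP/eqP => [/set1_inj|->].
rewrite s11 [[set i; j] == [set k]]eq_sym set1_eq2 //=.
rewrite orbF.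
case: (eqVneq i k) => [ik|ik]; case: (eqVneq j l) => [jl|jl];
case: (eqVneq i l) => [il|il]; case: (eqVneq j k) => [jk|jk]; subst => //=;
rewrite ?eqxx ?(negbTE ij) ?(negbTE kl) ?(negbTE ik) ?(negbTE jl) ?(negbTE il) ?(negbTE jk) //=;
by rewrite ?eqxx in ij kl.
Qed.


Lemma liftL_ok n (s : {perm 'I_n}) (x : Lvert n) : s (val x).1 != s (val x).2.
Proof. by rewrite (inj_eq (@perm_inj _ s)); exact: (valP x). Qed.

Definition liftL n (s : {perm 'I_n}) (x : Lvert n) : Lvert n :=
  exist _ (s (val x).1, s (val x).2) (@liftL_ok n s x).

Lemma liftL_inj n s : injective (@liftL n s).
Proof.
move=> [[a b] ab] [[c d] cd] /(congr1 val) [] /perm_inj e1 /perm_inj e2.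
by subst; congr exist; apply: bool_irrelevance.
Qed.

Lemma vt n : vertex_transitive (@Ladj n).
Proof.
move=> [[a b] ab] [[c d] cd].
pose s1 := tperm a c.
pose s2 := tperm (s1 b) d.
exists (perm (@liftL_inj n (s1 * s2)%g)); split.
- move=> x y; rewrite !permE !LadjE /=.
  by rewrite !(inj_eq (@perm_inj _ _)).
- apply: val_inj; rewrite permE /= !permM.
  have hs1a : s1 a = c by rewrite tpermL.
  have h1 : s1 b != c by rewrite -hs1a (inj_eq (@perm_inj _ _)) eq_sym.
  rewrite hs1a tpermL tpermD //; first by rewrite eq_sym.
Qed.


Lemma mulA n (v : 'rV[algC]_#|(Lvert n : finType)|) (y : Lvert n) :
  (v *m adjmx (@Ladj n)) 0 (enum_rank y) =
  \sum_(x : Lvert n) v 0 (enum_rank x) * (Ladj x y)%:R.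
Proof.
rewrite !mxE (big_enum_val (fun x => v 0 (enum_rank x) * (Ladj x y)%:R)) /=.
by apply: eq_bigr => k _; rewrite !mxE enum_valK enum_rankK.
Qed.

Lemma sumL n (G : 'I_n * 'I_n -> algC) :
  \sum_(x : Lvert n) G (val x) = \sum_(p | p.1 != p.2) G p.
Proof.
rewrite (reindex_omap (val : Lvert n -> 'I_n * 'I_n) insub) /=; last first.
  by move=> p pP; rewrite insubT.
apply: eq_bigl => x; rewrite valK /= eqxx andbT; symmetry; exact: (valP x).
Qed.

Lemma sum_ind (T : finType) (G : T -> algC) (P : pred T) :
  \sum_b G b * (P b)%:R = \sum_(b | P b) G b.
Proof. by rewrite [RHS]big_mkcond; apply: eq_bigr => b _; case: (P b); rewrite ?mulr1 ?mulr0. Qed.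

Lemma sum_if1 (T : finType) (c : T) (G : T -> algC) :
  \sum_b (if b == c then G b else 0) = G c.
Proof. by rewrite -big_mkcond big_pred1_eq. Qed.

Lemma keysum n (F : 'I_n -> 'I_n -> algC) (y : Lvert n) :
  \sum_(x : Lvert n) F (val x).1 (val x).2 * (Ladj x y)%:R =
  \sum_(k | (k != (val y).1) && (k != (val y).2)) F (val y).1 k + F (val y).2 (val y).1.
Proof.
case: y => [[i j] /= ij].
rewrite (eq_bigr (fun x : Lvert n => (fun p => F p.1 p.2 * ((p.1 == i) && (p.2 != j) || (p.1 == j) && (p.2 == i))%:R) (val x))); last by move=> x _; rewrite LadjE.
rewrite (@sumL n (fun p => F p.1 p.2 * ((p.1 == i) && (p.2 != j) || (p.1 == j) && (p.2 == i))%:R)).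
rewrite -(pair_big_dep xpredT (fun a b => a != b)
   (fun a b => F a b * ((a == i) && (b != j) || (a == j) && (b == i))%:R)) /=.
transitivity (\sum_a ((if a == i then \sum_(k | (k != i) && (k != j)) F i k else 0)
                     + (if a == j then F j i else 0))).
  apply: eq_bigr => a _.
  case: (eqVneq a i) => [->|ai].
    rewrite (negbTE ij) addr0 /= -sum_ind big_mkcond /= -[in RHS]sum_ind; apply: eq_bigr => b _.
    by rewrite orbF [i == b]eq_sym -mulrA -natrM mulnb andbC.
  case: (eqVneq a j) => [->|aj].
    rewrite add0r big_mkcond /= -(@sum_if1 _ i (fun b => F j b)); apply: eq_bigr => b _.
    case: (eqVneq b i) => [->|bi]; first by rewrite eq_sym ij mulr1.
    by case: (j != b); rewrite ?mulr0.
  by rewrite addr0 big1 // => b _; rewrite mulr0.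
by rewrite big_split /= !sum_if1.
Qed.


Lemma sum_excl2 n (h : 'I_n -> algC) i j : i != j ->
  \sum_(k | (k != i) && (k != j)) h k = \sum_k h k - h i - h j.
Proof.
move=> ij; rewrite [in RHS](bigD1 i) //= [in RHS](bigD1 j) //=; last by rewrite eq_sym.
by move: (\sum_(k | (k != i) && (k != j)) h k) => s; ring.
Qed.


Lemma algebra_core n (f : 'I_n -> 'I_n -> algC) (a : algC) :
  (forall i, f i i = 0) ->
  (forall i j, i != j -> a * f i j = \sum_k f i k - f i j + f j i) ->
  forall i j, i != j ->
  (a * (a + 2) * (a + 1) * (a + 2 - n%:R) * (a + 1 - n%:R)) * f i j = 0.
Proof.
move=> f0 E.
pose S i := \sum_k f i k.
pose T i := \sum_k f k i.
pose Sg := \sum_k S k.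
have E' : forall i j, a * f i j = S i - f i j + f j i - (if j == i then S i else 0).
  move=> i j; case: (eqVneq j i) => [->|ji].
    by rewrite f0 mulr0 subr0 addr0 subrr.
  by rewrite E 1?eq_sym // subr0.
have H3 : forall i, T i = (a + 2 - n%:R) * S i.
  move=> i.
  have : \sum_(j < n) a * f i j = \sum_(j < n) (S i - f i j + f j i - (if j == i then S i else 0)).
    by apply: eq_bigr => j _; exact: E'.
  rewrite -mulr_sumr !sumrB big_split /= sumrB sumr_const card_ord sum_if1.
  rewrite -/(S i) -/(T i) => h.
  apply/eqP; rewrite -subr_eq0; apply/eqP.
  transitivity ((S i *+ n - S i + T i - S i) - a * S i); last by rewrite -h subrr.
  rewrite -mulr_natl; ring.
have H4 : forall i, (a + 1) * T i = Sg.
  move=> i.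
  have : \sum_(j < n) a * f j i = \sum_(j < n) (S j - f j i + f i j - (if i == j then S j else 0)).
    by apply: eq_bigr => j _; exact: E'.
  rewrite -mulr_sumr !sumrB big_split /= sumrB.
  have hs : \sum_(j < n) (if i == j then S j else 0) = S i.
    rewrite (eq_bigr (fun j => if j == i then S i else 0)) ?sum_if1 // => j _.
    by case: (eqVneq i j) => [->|]; rewrite ?eqxx // eq_sym => /negbTE ->.
  rewrite hs -/(T i) -/(S i) -/Sg => h.
  apply/eqP; rewrite -subr_eq0; apply/eqP.
  transitivity (- (Sg - T i + S i - S i - a * T i)); last by rewrite -h subrr oppr0.
  ring.
have H5 : (a + 1) * Sg = n%:R * Sg.
  have : \sum_i T i = Sg by rewrite /T /Sg /S exchange_big.
  move=> hT; rewrite -hT mulr_sumr (eq_bigr (fun _ => Sg)); last by move=> i _; rewrite H4.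
  by rewrite sumr_const card_ord hT mulr_natl.
move=> i j ij.
have E1 := E' i j; have E2 := E' j i.
rewrite (negbTE ij) [j == i]eq_sym (negbTE ij) !subr0 in E1 E2.
have H3i := H3 i; have H3j := H3 j; have H4i := H4 i; have H4j := H4 j.
move: E1 E2 H3i H3j H4i H4j H5.
set fij := f i j; set fji := f j i; set Si := S i; set Sj := S j; set Ti := T i; set Tj := T j.
set N := n%:R.
move=> /eqP; rewrite -subr_eq0 => /eqP E1.
move=> /eqP; rewrite -subr_eq0 => /eqP E2.
move=> /eqP; rewrite -subr_eq0 => /eqP E3.
move=> /eqP; rewrite -subr_eq0 => /eqP E3'.
move=> /eqP; rewrite -subr_eq0 => /eqP E4.
move=> /eqP; rewrite -subr_eq0 => /eqP E4'.
move=> /eqP; rewrite -subr_eq0 => /eqP E5.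
pose q := (a + 1 - N) * (a + 1) * (a + 2 - N).
transitivity (q * (a + 1) * (a * fij - (Si - fij + fji))
  + q * (a * fji - (Sj - fji + fij))
  + (a + 1 - N) * (a + 1) * ((a + 1) * Ti - Sg)
  - (a + 1 - N) * (a + 1) * (a + 1) * (Ti - (a + 2 - N) * Si)
  + (a + 1 - N) * ((a + 1) * Tj - Sg)
  - (a + 1 - N) * (a + 1) * (Tj - (a + 2 - N) * Sj)
  + (a + 2) * ((a + 1) * Sg - N * Sg)); last first.
  by rewrite E1 E2 E3 E3' E4 E4' E5; ring.
rewrite /q; ring.
Qed.


Lemma eig_only n (a : algC) : graph_eigenvalue (@Ladj n) a ->
  a \in [:: -2; -1; 0; n%:R - 2; n%:R - 1].
Proof.
case/eigenvalueP => v hv vnz.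
pose f (i j : 'I_n) := if (insub (i, j) : option (Lvert n)) is Some x then v 0 (enum_rank x) else 0.
have fx : forall x : Lvert n, f (val x).1 (val x).2 = v 0 (enum_rank x).
  by move=> x; rewrite /f -surjective_pairing valK.
have f0 : forall i, f i i = 0 by move=> i; rewrite /f insubF // eqxx.
have E : forall i j, i != j -> a * f i j = \sum_k f i k - f i j + f j i.
  move=> i j ij; pose y : Lvert n := exist _ (i, j) ij.
  have := hv; move/rowP/(_ (enum_rank y)); rewrite mulA mxE.
  rewrite (eq_bigr (fun x => f (val x).1 (val x).2 * (Ladj x y)%:R)); last first.
    by move=> x _; rewrite fx.
  rewrite keysum /= sum_excl2 // f0 subr0 => h.
  transitivity (a * v 0 (enum_rank y)); first by congr (_ * _); exact: (fx y).
  exact: (esym h).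
case: (pickP (fun k => v 0 k != 0)) => [k hk|h0]; last first.
  by case/eqP: vnz; apply/rowP=> k; rewrite mxE; move: (h0 k) => /negbFE/eqP.
pose x := enum_val k.
have fnz : f (val x).1 (val x).2 != 0 by rewrite fx enum_valK.
have := @algebra_core n f a f0 E _ _ (valP x); move/eqP; rewrite mulf_eq0 (negbTE fnz) orbF.
rewrite !mulf_eq0 !inE -!orbA.
set N := n%:R.
have C : forall t e, e = a - t -> (e == 0) -> a == t.
  by move=> t e -> h; rewrite -subr_eq0.
case/orP=> [h|/orP[h|/orP[h|/orP[h|h]]]].
- by rewrite (C 0 a) ?orbT // subr0.
- by rewrite (C (-2) (a + 2)) // opprK.
- by rewrite (C (-1) (a + 1)) ?orbT // opprK.
- by rewrite (C (N - 2) (a + 2 - N)) ?orbT //; ring.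
- by rewrite (C (N - 1) (a + 1 - N)) ?orbT //; ring.
Qed.


Lemma mkeig n (a : algC) (F : 'I_n -> 'I_n -> algC) (x0 : Lvert n) :
  F (val x0).1 (val x0).2 != 0 ->
  (forall i j, i != j -> \sum_k F i k - F i i - F i j + F j i = a * F i j) ->
  graph_eigenvalue (@Ladj n) a.
Proof.
move=> nz H; apply/eigenvalueP.
exists (\row_k F (val (enum_val k)).1 (val (enum_val k)).2).
  apply/rowP => k; rewrite -[k]enum_valK mulA mxE.
  rewrite (eq_bigr (fun x => F (val x).1 (val x).2 * (Ladj x (enum_val k))%:R)); last first.
    by move=> x _; rewrite mxE enum_rankK.
  rewrite keysum sum_excl2; last exact: (valP (enum_val k)).
  by rewrite H ?mxE ?enum_rankK //; exact: (valP (enum_val k)).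
apply/eqP => h; move/rowP/(_ (enum_rank x0)): h; rewrite !mxE enum_rankK.
by apply/eqP.
Qed.

Definition ee n (c : 'I_n) (k : 'I_n) : algC := (k == c)%:R.
Arguments ee {n}.

Lemma sum_ee n (c : 'I_n) : \sum_k ee c k = 1.
Proof. by rewrite (bigD1 c) //= /ee eqxx big1 ?addr0 // => k /negbTE ->. Qed.

Lemma eig_if n (hn : (3 < n)%N) (a : algC) :
  a \in [:: -2; -1; 0; n%:R - 2; n%:R - 1] -> graph_eigenvalue (@Ladj n) a.
Proof.
have h2 : (2 < n)%N := ltnW hn.
have h1 : (1 < n)%N := ltnW h2.
have h0 : (0 < n)%N := ltnW h1.
pose i0 := Ordinal h0; pose i1 := Ordinal h1; pose i2 := Ordinal h2; pose i3 := Ordinal hn.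
have d01 : i0 != i1 by []. have d02 : i0 != i2 by []. have d20 : i2 != i0 by [].
pose u k := ee i0 k - ee i1 k.
pose w k := ee i2 k - ee i3 k.
have su : \sum_k u k = 0 by rewrite sumrB !sum_ee subrr.
have sw : \sum_k w k = 0 by rewrite sumrB !sum_ee subrr.
have uw : forall k, u k * w k = 0.
  move=> k; rewrite /u /w /ee.
  have q : forall (x y : 'I_n), (nat_of_ord x == nat_of_ord y) = false -> (x == y) = false by [].
  case: (eqVneq k i0) => [->|/negbTE k0].
    by rewrite ?eqxx (q i0 i1) // (q i0 i2) // (q i0 i3) // subrr mulr0.
  case: (eqVneq k i1) => [->|/negbTE k1].
    by rewrite (q i1 i2) // (q i1 i3) // subrr mulr0.
  by rewrite subrr mul0r.
set N := n%:R.
have e01 : (i0 == i1) = false by []. have e02 : (i0 == i2) = false by [].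
have e03 : (i0 == i3) = false by []. have e10 : (i1 == i0) = false by [].
have e12 : (i1 == i2) = false by []. have e13 : (i1 == i3) = false by [].
have e20 : (i2 == i0) = false by []. have e21 : (i2 == i1) = false by [].
have e23 : (i2 == i3) = false by []. have e30 : (i3 == i0) = false by [].
have e31 : (i3 == i1) = false by []. have e32 : (i3 == i2) = false by [].
rewrite !inE; case/orP=> [/eqP->|/orP[/eqP->|/orP[/eqP->|/orP[/eqP->|/eqP->]]]].
-
  pose F i j := u i * w j - w i * u j.
  apply: (@mkeig n _ F (exist _ (i0, i2) d02)).
    rewrite /F /u /w /ee /= ?eqxx ?e01 ?e02 ?e03 ?e10 ?e12 ?e13 ?e20 ?e21 ?e23 ?e30 ?e31 ?e32.
    by rewrite ?subr0 ?subrr ?mulr0 ?mul0r ?mulr1 ?subrr ?add0r ?addr0 ?subr0 oner_eq0.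
  move=> i j ij; rewrite /F sumrB -!mulr_sumr su sw !mulr0 subrr; ring.
-
  pose F (i j : 'I_n) := u j.
  apply: (@mkeig n _ F (exist _ (i2, i0) d20)).
    rewrite /F /u /w /ee /= ?eqxx ?e01 ?e02 ?e03 ?e10 ?e12 ?e13 ?e20 ?e21 ?e23 ?e30 ?e31 ?e32.
    by rewrite ?subr0 ?subrr ?mulr0 ?mul0r ?mulr1 ?subrr ?add0r ?addr0 ?subr0 oner_eq0.
  move=> i j ij; rewrite /F su; ring.
-
  pose F i j := u i * w j + w i * u j.
  apply: (@mkeig n _ F (exist _ (i0, i2) d02)).
    rewrite /F /u /w /ee /= ?eqxx ?e01 ?e02 ?e03 ?e10 ?e12 ?e13 ?e20 ?e21 ?e23 ?e30 ?e31 ?e32.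
    by rewrite ?subr0 ?subrr ?mulr0 ?mul0r ?mulr1 ?subrr ?add0r ?addr0 ?subr0 oner_eq0.
  move=> i j ij; rewrite /F big_split /= -!mulr_sumr su sw !mulr0 addr0 [w i * u i]mulrC uw; ring.
-
  pose F i j := (N - 1) * u i + u j.
  apply: (@mkeig n _ F (exist _ (i2, i0) d20)).
    rewrite /F /u /w /ee /= ?eqxx ?e01 ?e02 ?e03 ?e10 ?e12 ?e13 ?e20 ?e21 ?e23 ?e30 ?e31 ?e32.
    by rewrite ?subr0 ?subrr ?mulr0 ?mul0r ?mulr1 ?subrr ?add0r ?addr0 ?subr0 oner_eq0.
  move=> i j ij; rewrite /F big_split /= su sumr_const card_ord -mulr_natl; ring.
-
  pose F (i j : 'I_n) := (1 : algC).
  apply: (@mkeig n _ F (exist _ (i0, i2) d02)); first by rewrite oner_eq0.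
  move=> i j ij; rewrite /F sumr_const card_ord -mulr_natl; ring.
Qed.

Theorem theorem3p4 (n : nat) (hn : (3 < n)%N) :
  vertex_transitive (@Ladj n) /\ integral_graph (@Ladj n) /\
  (forall a : algC, graph_eigenvalue (@Ladj n) a <->
     a \in [:: -2; -1; 0; n%:R - 2; n%:R - 1]).
Proof.
have EQ : forall a : algC, graph_eigenvalue (@Ladj n) a <->
     a \in [:: -2; -1; 0; n%:R - 2; n%:R - 1].
  by move=> a; split; [exact: eig_only | exact: eig_if].
split; first exact: vt.
split; last exact: EQ.
move=> a /EQ; rewrite !inE.
case/orP=> [/eqP->|/orP[/eqP->|/orP[/eqP->|/orP[/eqP->|/eqP->]]]];
  by rewrite ?rpredN ?rpredB ?rpred_nat ?rpred0 ?rpred1.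
Qed.
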